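(* Let $G$ be a finite group and let $M,N$ be normal subgroups with $1<M\le N<G$ such that every $g\in G\setminus N$ is conjugate in $G$ to every element of $gM$. Let $Z_1=Z(G)$ and, for $i>1$, let $Z_i$ be defined by $Z_i/Z_{i-1}=Z(G/Z_{i-1})$. If $m\ge 1$ and $Z_m<M$, then $Z_{m+1}\le N$. *)

(* Defs.v *)
From mathcomp Require Import all_boot all_fingroup all_solvable.
Set Implicit Arguments. Unset Strict Implicit. Unset Printing Implicit Defensive.

(* Main.v *)
Require Import Defs.
From mathcomp Require Import all_boot all_fingroup all_solvable.
Set Implicit Arguments. Unset Strict Implicit. Unset Printing Implicit Defensive.
Local Open Scope group_scope.

Theorem mainTheorem10 (gT : finGroupType) (G M N : {group gT}) (m : nat) :
  M <| G -> N <| G ->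
  [1 gT] \proper M -> M \subset N -> N \proper G ->
  (forall g, g \in G :\: N -> forall x, x \in g *: M -> x \in g ^: G) ->
  (1 <= m)%N ->
  'Z_m(G) \proper M ->
  'Z_m.+1(G) \subset N.
Proof.
move=> nMG nNG _ _ _ Hc _ ZM.
apply/subsetP => g Hg; case: (boolP (g \in N)) => // gN; exfalso.
have gG : g \in G := subsetP (ucn_sub m.+1 G) g Hg.
have : M \subset 'Z_m(G).
  apply/subsetP => x xM.
  have : g * x \in g ^: G.
    apply: Hc; first by rewrite inE gN gG.
    by rewrite mem_lcoset mulKg.
  case/imsetP => h hG e.
  have -> : x = [~ g, h] by rewrite commgEl -e mulKg.
  apply: (subsetP (ucn_comm m G)).
  exact: mem_commg.
by move=> H; move/proper_subn: ZM; rewrite H.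
Qed.
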